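(* Let $I$ be a finitely generated pure ideal of a commutative ring $R$. Then $R$ is semihereditary if and only if $R\bowtie I$ is semihereditary.
   Context: All rings are commutative with identity. For an ideal $I$ of $R$, $R\bowtie I=\{(r,r+i): r\in R,\ i\in I\}$ is a subring of $R\times R$ (componentwise operations, unit $(1,1)$). An ideal $I$ is pure if $R/I$ is a flat $R$-module. A ring is semihereditary if every finitely generated ideal is projective. *)

(* Defs.v *)
From HB Require Import structures.
From mathcomp Require Import all_boot all_algebra.
From mathcomp Require Import boolp.
From mathcomp Require Import ring.

Set Implicit Arguments.
Unset Strict Implicit.
Unset Printing Implicit Defensive.

Import GRing.Theory.
Local Open Scope ring_scope.

Definition is_ideal (A : comPzRingType) (J : A -> Prop) : Prop :=
  [/\ J 0, (forall x y, J x -> J y -> J (x - y)) &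
      (forall a x, J x -> J (a * x))].

Definition fg_ideal (A : comPzRingType) (J : A -> Prop) : Prop :=
  exists (n : nat) (g : 'I_n -> A),
    forall x, J x <-> exists c : 'I_n -> A, x = \sum_(i < n) c i * g i.

Definition linear_on (A : pzRingType) (V W : lmodType A) (S : V -> Prop)
    (f : V -> W) : Prop :=
  forall (a : A) (u v : V), S u -> S v -> f (a *: u + v) = a *: f u + f v.

Definition submodule (A : pzRingType) (V : lmodType A) (S : V -> Prop) : Prop :=
  [/\ S 0, (forall u v, S u -> S v -> S (u + v)) &
      (forall (a : A) u, S u -> S (a *: u))].

(* A linear map J -> X is represented by a function A -> X that is linear   *)
(* on J (its values outside J are irrelevant).                              *)

Definition projective_ideal (A : comPzRingType) (J : A -> Prop) : Prop :=
  forall (M N : lmodType A) (f : M -> N),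
    linear_on (fun _ => True) f -> (forall y : N, exists x : M, f x = y) ->
  forall g : A -> N, linear_on (V := A^o) J g ->
  exists h : A -> M, linear_on (V := A^o) J h /\ (forall x, J x -> f (h x) = g x).

Definition semihereditary (A : comPzRingType) : Prop :=
  forall J : A -> Prop, fg_ideal J -> projective_ideal J.

(* For a submodule S of N and x_i in S, m_i in M, the element                *)
(*   sum_i x_i (x) m_i  of  S (x)_A M                                        *)
(* vanishes iff every A-bilinear map S x M -> P kills sum_i b(x_i, m_i).     *)

Definition bilinear_on (A : comPzRingType) (N M P : lmodType A) (S : N -> Prop)
    (b : N -> M -> P) : Prop :=
  (forall m : M, linear_on S (fun x => b x m)) /\
  (forall x : N, S x -> linear_on (fun _ => True) (b x)).

Definition tensor_vanishes (A : comPzRingType) (N M : lmodType A)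
    (S : N -> Prop) (k : nat) (x : 'I_k -> N) (m : 'I_k -> M) : Prop :=
  forall (P : lmodType A) (b : N -> M -> P),
    bilinear_on S b -> \sum_(i < k) b (x i) (m i) = 0.

(* M is flat iff - (x)_A M preserves injections, i.e. for every submodule
   S of a module N the natural map S (x) M -> N (x) M is injective. *)
Definition flat (A : comPzRingType) (M : lmodType A) : Prop :=
  forall (N : lmodType A) (S : N -> Prop), submodule S ->
  forall (k : nat) (x : 'I_k -> N) (m : 'I_k -> M),
    (forall i, S (x i)) ->
    tensor_vanishes (fun _ => True) x m -> tensor_vanishes S x m.

(* I is pure iff R/I is a flat R-module.  R/I is given (up to isomorphism)
   as any R-module M with a surjective R-linear map R -> M of kernel I. *)
Definition pure_ideal (R : comPzRingType) (I : R -> Prop) : Prop :=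
  forall (M : lmodType R) (pi : R -> M),
    linear_on (V := R^o) (fun _ => True) pi ->
    (forall y : M, exists r : R, pi r = y) ->
    (forall r : R, pi r = 0 <-> I r) ->
    flat M.

Section Dup.
Variables (R : comPzRingType) (I : R -> Prop) (hI : is_ideal I).

Definition dup_pred : {pred R * R} := [pred x : R * R | `[< I (x.2 - x.1) >]].

Lemma dup_subring_closed : subring_closed dup_pred.
Proof.
case: hI => I0 IB IM.
rewrite /subring_closed; split.
- by rewrite inE; apply/asboolP; rewrite subrr.
- move=> [a b] [c d]; rewrite !inE /= => /asboolP h1 /asboolP h2; apply/asboolP.
  have -> : b - d - (a - c) = (b - a) - (d - c) by ring.
  exact: IB.
- move=> [a b] [c d]; rewrite !inE /= => /asboolP h1 /asboolP h2; apply/asboolP.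
  have -> : b * d - a * c = b * (d - c) + c * (b - a)
    by ring.
  have -> : b * (d - c) + c * (b - a) = b * (d - c) - (- c) * (b - a)
    by ring.
  by apply: IB; apply: IM.
Qed.

Definition dup := {x : R * R | x \in dup_pred}.

End Dup.

Definition dup_t (R : comPzRingType) (I : R -> Prop) (hI : is_ideal I) :=
  dup I.

HB.instance Definition _ (R : comPzRingType) (I : R -> Prop) (hI : is_ideal I) :=
  [isSub of dup_t hI for @sval _ _].
HB.instance Definition _ (R : comPzRingType) (I : R -> Prop) (hI : is_ideal I) :=
  [Choice of dup_t hI by <:].
HB.instance Definition _ (R : comPzRingType) (I : R -> Prop) (hI : is_ideal I) :=
  GRing.SubChoice_isSubComPzRing.Build (R * R)%type (dup_pred I) (dup_t hI)
    (dup_subring_closed hI).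

Notation "R ⋈ hI" := (@dup_t R _ hI) (at level 40).

(* Main.v *)
Require Import Defs.
From HB Require Import structures.
From mathcomp Require Import all_boot all_algebra.
From mathcomp Require Import boolp ring.
Set Implicit Arguments. Unset Strict Implicit.
Import GRing.Theory.
Local Open Scope ring_scope.

Lemma lin0 (A : pzRingType) (V W : lmodType A) (S : V -> Prop) (f : V -> W) :
  S 0 -> linear_on S f -> f 0 = 0.
Proof.
move=> S0 lf; have := lf 1 0 0 S0 S0; rewrite scaler0 addr0 scale1r.
by move=> h; apply/eqP; rewrite -(addrI (f 0) (esym (etrans (addr0 _) h))).
Qed.

Lemma lin_sum (A : pzRingType) (V W : lmodType A) (S : V -> Prop) (f : V -> W) :
  S 0 -> (forall u v, S u -> S v -> S (u + v)) -> (forall a u, S u -> S (a *: u)) ->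
  linear_on S f -> forall n (c : 'I_n -> A) (v : 'I_n -> V), (forall i, S (v i)) ->
  S (\sum_(i < n) c i *: v i) /\ f (\sum_(i < n) c i *: v i) = \sum_(i < n) c i *: f (v i).
Proof.
move=> S0 SD SZ lf; elim=> [|n IH] c v Sv.
  by rewrite !big_ord0; split=> //; apply: lin0 lf.
have [h1 h2] := IH (fun i => c (widen_ord (leqnSn n) i)) (fun i => v (widen_ord (leqnSn n) i)) (fun i => Sv _).
rewrite !big_ord_recr /=; split; first by apply: SD=> //; apply: SZ.
by rewrite addrC lf // h2 addrC.
Qed.

Definition DB (A : comPzRingType) (J : A -> Prop) : Prop :=
  exists n (g : 'I_n -> A) (phi : 'I_n -> A -> A),
    [/\ forall i, J (g i),
        forall i a u v, J u -> J v -> phi i (a * u + v) = a * phi i u + phi i v &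
        forall x, J x -> x = \sum_(i < n) phi i x * g i].

Section FG.
Variables (A : comPzRingType) (J : A -> Prop) (hJ : fg_ideal J).
Lemma fg0 : J 0.
Proof. case: hJ => n [g h]; apply/h; exists (fun _ => 0); by rewrite big1 // => i; rewrite mul0r. Qed.
Lemma fgD x y : J x -> J y -> J (x + y).
Proof.
case: hJ => n [g h] /h [c ->] /h [d ->]; apply/h; exists (fun i => c i + d i).
by rewrite -big_split; apply: eq_bigr => i _; rewrite mulrDl.
Qed.
Lemma fgM a x : J x -> J (a * x).
Proof.
case: hJ => n [g h] /h [c ->]; apply/h; exists (fun i => a * c i).
by rewrite mulr_sumr; apply: eq_bigr => i _; rewrite mulrA.
Qed.
Lemma fgN x : J x -> J (- x).
Proof. by move=> Jx; rewrite -mulN1r; apply: fgM. Qed.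
End FG.

Lemma DB_proj (A : comPzRingType) (J : A -> Prop) : fg_ideal J -> DB J -> projective_ideal J.
Proof.
move=> hJ [n [G [phi [JG lphi rep]]]] M N f flin fsurj g glin.
have [m hm] := choice (fun i => fsurj (g (G i))).
exists (fun x => \sum_(i < n) phi i x *: m i); split.
  move=> a u v Ju Jv /=.
  rewrite scaler_sumr -big_split; apply: eq_bigr => i _ /=.
  by rewrite lphi // scalerDl scalerA.
move=> x Jx.
have [_ ->] := @lin_sum A M N (fun _ => True) f I (fun _ _ _ _ => I) (fun _ _ _ => I) flin n (phi^~ x) m (fun _ => I).
have [_ e] := @lin_sum A A^o N J g (fg0 hJ) (@fgD _ _ hJ) (@fgM _ _ hJ) glin n (phi^~ x) G JG.
rewrite [in RHS](rep x Jx) e; apply: eq_bigr => i _; by rewrite hm.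
Qed.

Definition jpred (A : comPzRingType) (J : A -> Prop) : {pred A^o} := [pred x | `[< J x >]].

Lemma jpred_closed (A : comPzRingType) (J : A -> Prop) (hJ : is_ideal J) :
  GRing.subsemimod_closed (jpred J).
Proof.
case: hJ => J0 JB JM.
have JN : forall x, J x -> J (- x) by move=> x Jx; rewrite -sub0r; apply: JB.
split; first split.
- by rewrite inE; apply/asboolP.
- move=> x y; rewrite !inE => /asboolP hx /asboolP hy; apply/asboolP.
  by rewrite -[y]opprK; apply: JB => //; apply: JN.
- move=> a x; rewrite !inE => /asboolP hx; apply/asboolP; exact: JM.
Qed.

Definition jsub (A : comPzRingType) (J : A -> Prop) (hJ : is_ideal J) :=
  {x : A^o | x \in jpred J}.

HB.instance Definition _ (A : comPzRingType) (J : A -> Prop) (hJ : is_ideal J) :=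
  [isSub of jsub hJ for @sval _ _].
HB.instance Definition _ (A : comPzRingType) (J : A -> Prop) (hJ : is_ideal J) :=
  [Choice of jsub hJ by <:].
HB.instance Definition _ (A : comPzRingType) (J : A -> Prop) (hJ : is_ideal J) :=
  GRing.SubChoice_isSubLmodule.Build A A^o (jpred J) (jsub hJ) (jpred_closed hJ).


Lemma jP (A : comPzRingType) (J : A -> Prop) x : J x -> x \in jpred J.
Proof. by move=> h; rewrite inE; apply/asboolP. Qed.

Lemma fg_ideal_is (A : comPzRingType) (J : A -> Prop) : fg_ideal J -> is_ideal J.
Proof.
move=> h; split; [exact: fg0 | | exact: fgM].
by move=> x y Jx Jy; apply: fgD => //; apply: fgN.
Qed.

Lemma proj_DB (A : comPzRingType) (J : A -> Prop) : fg_ideal J -> projective_ideal J -> DB J.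
Proof.
move=> hJ P; have hJi := fg_ideal_is hJ.
have hJ' := hJ; case: hJ' => n [g hg].
have Jg : forall c : 'I_n -> A, J (\sum_(i < n) c i * g i) by move=> c; apply/hg; exists c.
pose f := fun c : 'rV[A]_n => (insubd (0 : jsub hJi) (\sum_(i < n) c 0 i * g i)).
have fv : forall c, val (f c) = \sum_(i < n) c 0 i * g i.
  by move=> c; rewrite /f val_insubd jP //; apply: Jg.
pose g' := fun x : A => insubd (0 : jsub hJi) x.
have gv : forall x, J x -> val (g' x) = x by move=> x Jx; rewrite /g' val_insubd jP.
have flin : linear_on (fun _ => True) f.
  move=> a u v _ _; apply: val_inj; rewrite raddfD /= !fv.
  rewrite scaler_sumr -big_split; apply: eq_bigr => i _ /=.
  by rewrite !mxE mulrDl -mulrA.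
have fsurj : forall y, exists c, f c = y.
  move=> y; have := valP y; rewrite inE => /asboolP /hg [c hc].
  exists (\row_i c i); apply: val_inj; rewrite fv hc; apply: eq_bigr => i _; by rewrite mxE.
have glin : linear_on (V := A^o) J g'.
  move=> a u v Ju Jv; apply: val_inj; rewrite raddfD /= !gv //.
  by apply: (fgD hJ) => //; apply: (fgM hJ).
have [h [hl hh]] := P _ _ f flin fsurj g' glin.
exists n, g, (fun i x => h x 0 i); split.
- by move=> i; have := Jg (fun j => if j == i then 1 else 0); rewrite (bigD1 i) //= eqxx mul1r big1 ?addr0 // => j /negbTE ->; rewrite mul0r.
- by move=> i a u v Ju Jv /=; rewrite hl // !mxE.
move=> x Jx; have := congr1 val (hh x Jx); rewrite fv gv // => <-; done.
Qed.

Lemma semi_DB (A : comPzRingType) : semihereditary A <-> (forall J : A -> Prop, fg_ideal J -> DB J).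
Proof.
split=> H J hJ; first exact: proj_DB (H J hJ).
exact: DB_proj (H J hJ).
Qed.

Lemma sum_pair (R : comPzRingType) n (F : 'I_n -> R * R) :
  \sum_(i < n) F i = (\sum_(i < n) (F i).1, \sum_(i < n) (F i).2).
Proof.
elim: n F => [|n IH] F; first by rewrite !big_ord0.
by rewrite !big_ord_recr IH.
Qed.

Section Dup2.
Variables (R : comPzRingType) (I : R -> Prop) (hI : is_ideal I).

Lemma I0 : I 0. Proof. by case: hI. Qed.
Lemma IB x y : I x -> I y -> I (x - y). Proof. by case: hI => _ h _; apply: h. Qed.
Lemma IM a x : I x -> I (a * x). Proof. by case: hI => _ _ h; apply: h. Qed.
Lemma IMr a x : I x -> I (x * a). Proof. by rewrite mulrC; apply: IM. Qed.
Lemma IN x : I x -> I (- x). Proof. by move=> h; rewrite -sub0r; apply: IB => //; apply: I0. Qed.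

Definition mkD (r s : R) : R ⋈ hI := insubd 0 (r, s).
Lemma mkDv r s : I (s - r) -> val (mkD r s) = (r, s).
Proof. by move=> h; rewrite /mkD val_insubd inE /=; rewrite asboolT. Qed.
Lemma dval (X : R ⋈ hI) : I ((val X).2 - (val X).1).
Proof. by have := valP X; rewrite inE => /asboolP. Qed.
Definition del (r : R) := mkD r r.
Lemma delv r : val (del r) = (r, r).
Proof. by rewrite mkDv // subrr; apply: I0. Qed.
End Dup2.

Section Back.
Variables (R : comPzRingType) (I : R -> Prop) (hI : is_ideal I).

Lemma fstD (X : R ⋈ hI) : (val X).1 = (val X).1. Proof. by []. Qed.

Lemma back_DB : (forall J : R ⋈ hI -> Prop, fg_ideal J -> DB J) ->
  forall J : R -> Prop, fg_ideal J -> DB J.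
Proof.
move=> H J hJ; have hJ' := hJ; case: hJ' => m [a ha].
pose Jh := fun X : R ⋈ hI => exists c : 'I_m -> R ⋈ hI, X = \sum_(k < m) c k * del hI (a k).
have [n [G [Phi [JG lPhi rPhi]]]] : DB Jh by apply: H; exists m, (fun k => del hI (a k)).
have key : forall X, Jh X -> J (val X).1.
  move=> X [c ->]; apply/ha; exists (fun k => (val (c k)).1).
  rewrite rmorph_sum raddf_sum; apply: eq_bigr => k _ /=.
  by rewrite ?rmorphM delv.
have kd : forall x, J x -> Jh (del hI x).
  move=> x /ha [c ->]; exists (fun k => del hI (c k)); apply: val_inj.
  rewrite delv rmorph_sum sum_pair; congr (_, _); apply: eq_bigr => k _;
  by rewrite rmorphM !delv.
have dlin : forall s u v, del hI (s * u + v) = del hI s * del hI u + del hI v.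
  by move=> s u v; apply: val_inj; rewrite rmorphD rmorphM /= !delv.
exists n, (fun i => (val (G i)).1), (fun i x => (val (Phi i (del hI x))).1); split.
- by move=> i; apply: key.
- move=> i s u v Ju Jv /=; rewrite dlin lPhi; [|exact: kd|exact: kd].
  by rewrite rmorphD rmorphM /= delv.
move=> x Jx; have := congr1 (fun X => (val X).1) (rPhi _ (kd x Jx)).
have sv : forall Y : R ⋈ hI, sval Y = val Y by [].
rewrite /= delv /= => e; rewrite {1}e sv rmorph_sum raddf_sum; apply: eq_bigr => i _.
reflexivity. Qed.
End Back.

Section Fwd.
Variables (R : comPzRingType) (I : R -> Prop) (hI : is_ideal I).
Variables (e : R) (Ie : I e) (he : forall i, I i -> e * i = i).

Lemma valM (X Y : R ⋈ hI) : val (X * Y) = val X * val Y. Proof. by []. Qed.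
Lemma valD (X Y : R ⋈ hI) : val (X + Y) = val X + val Y. Proof. by rewrite rmorphD. Qed.
Lemma sv (Y : R ⋈ hI) : sval Y = val Y. Proof. by []. Qed.
Lemma pairM (a b c d : R) : (a, b) * (c, d) = (a * c, b * d). Proof. by []. Qed.
Lemma pairD (a b c d : R) : (a, b) + (c, d) = (a + c, b + d). Proof. by []. Qed.
Lemma delsv r : sval (del hI r) = (r, r). Proof. exact: delv. Qed.

Lemma fwd_DB : (forall J : R -> Prop, fg_ideal J -> DB J) ->
  forall J : R ⋈ hI -> Prop, fg_ideal J -> DB J.
Proof.
move=> H J hJ; have hJ' := hJ; case: hJ' => m [G hG].
pose J1 := fun x => exists X, J X /\ (val X).1 = x.
pose J2 := fun x => exists X, J X /\ e * (val X).2 = x.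
have fg1 : fg_ideal J1.
  exists m, (fun k => (val (G k)).1) => x; split.
  - move=> [X [/hG [c ->] <-]]; exists (fun k => (val (c k)).1).
    by rewrite rmorph_sum raddf_sum; apply: eq_bigr => k _.
  - move=> [c ->]; exists (\sum_(k < m) del hI (c k) * G k); split.
      by apply/hG; exists (fun k => del hI (c k)).
    rewrite rmorph_sum raddf_sum; apply: eq_bigr => k _ /=.
    by rewrite delsv.
have fg2 : fg_ideal J2.
  exists m, (fun k => e * (val (G k)).2) => x; split.
  - move=> [X [/hG [c ->] <-]]; exists (fun k => (val (c k)).2).
    rewrite rmorph_sum raddf_sum mulr_sumr; apply: eq_bigr => k _ /=.
    by ring.
  - move=> [c ->]; exists (\sum_(k < m) del hI (c k) * G k); split.
      by apply/hG; exists (fun k => del hI (c k)).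
    rewrite rmorph_sum raddf_sum mulr_sumr; apply: eq_bigr => k _ /=.
    rewrite delsv /=; ring.
have [n1 [g1 [p1 [Jg1 l1 r1]]]] := H _ fg1.
have [n2 [g2 [p2 [Jg2 l2 r2]]]] := H _ fg2.
pose Gen := fun i : 'I_(n1 + n2) => match split i with
  | inl j => mkD hI (g1 j) (g1 j * (1 - e)) | inr j => mkD hI 0 (g2 j) end.
pose Phi := fun (i : 'I_(n1 + n2)) (X : R ⋈ hI) => match split i with
  | inl j => mkD hI (p1 j (val X).1) (p1 j (val X).1 * (1 - e))
  | inr j => mkD hI 0 (e * p2 j (e * (val X).2)) end.
have m1 : forall p, val (mkD hI p (p * (1 - e))) = (p, p * (1 - e)).
  move=> p; rewrite mkDv //; have -> : p * (1 - e) - p = - (p * e) by ring.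
  by apply: (IN hI); apply: (IM hI).
have m2 : forall q, I q -> val (mkD hI 0 q) = (0, q) by move=> q hq; rewrite mkDv // subr0.
have m1' : forall p, sval (mkD hI p (p * (1 - e))) = (p, p * (1 - e)) by exact: m1.
have m2' : forall q, I q -> sval (mkD hI 0 q) = (0, q) by exact: m2.
have Ig2 : forall j, I (g2 j) by move=> j; have [X [_ <-]] := Jg2 j; apply: (IMr hI).
have hE : forall X : R ⋈ hI, e * ((val X).2 - (val X).1) = (val X).2 - (val X).1.
  by move=> X; apply: he; apply: dval.
have ee : e * e = e by apply: he.
have sl : forall j : 'I_n1, split (lshift n2 j) = inl j by move=> j; exact: (unsplitK (inl j : 'I_n1 + 'I_n2)).
have sr : forall j : 'I_n2, split (rshift n1 j) = inr j by move=> j; exact: (unsplitK (inr j : 'I_n1 + 'I_n2)).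
exists (n1 + n2)%N, Gen, Phi; split.
- move=> i; rewrite /Gen; case: (split i) => j.
  + have [X [JX hX]] := Jg1 j.
    have -> : mkD hI (g1 j) (g1 j * (1 - e)) = mkD hI 1 (1 - e) * X.
      apply: val_inj; rewrite m1 valM mkDv; last first.
        have -> : 1 - e - 1 = - e by ring.
        by apply: (IN hI).
      rewrite -hX /=; congr (_, _); first by rewrite mul1r.
      apply/eqP; rewrite -subr_eq0.
      have -> : (val X).1 * (1 - e) - (1 - e) * (val X).2 =
        e * ((val X).2 - (val X).1) - ((val X).2 - (val X).1) by ring.
      by rewrite hE subrr.
    exact: (fgM hJ).
  + have [X [JX hX]] := Jg2 j.
    have -> : mkD hI 0 (g2 j) = mkD hI 0 e * X.
      apply: val_inj; rewrite m2 // valM m2; last by [].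
      by rewrite -hX /=; case: (sval X) => x1 x2; rewrite pairM mul0r.
    exact: (fgM hJ).
- move=> i A U V JU JV; rewrite /Phi; case: (split i) => j; apply: val_inj.
  + rewrite !valD !valM !m1 /= l1; try by [exists U | exists V].
    congr (_, _); apply/eqP; rewrite -subr_eq0.
    set pu := p1 j (val U).1; set pv := p1 j (val V).1.
    have -> : (((val A).1 * pu + pv) * (1 - e) - ((val A).2 * (pu * (1 - e)) + pv * (1 - e))) =
       pu * (e * ((val A).2 - (val A).1) - ((val A).2 - (val A).1)) by ring.
    by rewrite hE subrr mulr0.
  + have -> : e * ((val A).2 * (val U).2 + (val V).2) = (val A).2 * (e * (val U).2) + e * (val V).2 by ring.
    rewrite !valD !valM !m2 /=; try by apply: (IMr hI).
    rewrite l2; try by [exists U | exists V].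
    case: (sval A) => a1 a2; rewrite pairM pairD.
    congr (_, _); first by rewrite mulr0 addr0.
    by rewrite /=; ring.
- move=> X JX; apply: val_inj; rewrite rmorph_sum big_split_ord /=.
  rewrite (eq_bigr (fun j => (p1 j (val X).1 * g1 j, p1 j (val X).1 * (1 - e) * (g1 j * (1 - e))))); last first.
    by move=> j _; rewrite /Phi /Gen sl !m1'.
  rewrite (eq_bigr (fun j => (0, e * p2 j (e * (val X).2) * g2 j))); last first.
    move=> j _; rewrite /Phi /Gen sr !m2' //; last by apply: (IMr hI).
    by rewrite pairM mul0r.
  rewrite !sum_pair pairD [LHS]surjective_pairing; congr (_, _).
    rewrite /= [X in _ + X]big1 ?addr0 //; apply: r1; by exists X.
  rewrite /= (eq_bigr (fun j => (1 - e) * (1 - e) * (p1 j (val X).1 * g1 j))); last by move=> j _; ring.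
  rewrite (eq_bigr (fun j => e * (p2 j (e * (val X).2) * g2 j))); last by move=> j _; ring.
  rewrite -!mulr_sumr -r1; last by exists X.
  rewrite -r2; last by exists X.
  apply/eqP; rewrite -subr_eq0.
  have -> : (val X).2 - ((1 - e) * (1 - e) * (val X).1 + e * (e * (val X).2)) =
    - ((e * e - e) * ((val X).1 + (val X).2) + (e * ((val X).2 - (val X).1) - ((val X).2 - (val X).1))) by ring.
  by rewrite ee hE !subrr mul0r add0r oppr0.
Qed.
End Fwd.

Section Rep.
Variables (R : comPzRingType) (J : R -> Prop) (hJ : is_ideal J).
Let J0 : J 0. Proof. by case: hJ. Qed.
Let JB x y : J x -> J y -> J (x - y). Proof. by case: hJ => _ h _; apply: h. Qed.
Let JM a x : J x -> J (a * x). Proof. by case: hJ => _ _ h; apply: h. Qed.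
Let JD x y : J x -> J y -> J (x + y).
Proof. by move=> hx hy; rewrite -[y]opprK; apply: JB => //; rewrite -sub0r; apply: JB. Qed.

Lemma rep_ex (r : R) : exists x, `[< J (x - r) >].
Proof. by exists r; apply/asboolP; rewrite subrr. Qed.
Definition rep (r : R) : R := xchoose (rep_ex r).
Lemma rep_spec r : J (rep r - r).
Proof. exact/asboolP/(xchooseP (rep_ex r)). Qed.
Lemma rep_eq r s : J (r - s) -> rep r = rep s.
Proof.
move=> h; apply: eq_xchoose => x; apply/asboolP/asboolP => h'.
  have -> : x - s = (x - r) + (r - s) by ring.
  by apply: JD.
have -> : x - r = (x - s) - (r - s) by ring.
by apply: JB.
Qed.
End Rep.

Definition qt (R : comPzRingType) (J : R -> Prop) (hJ : is_ideal J) :=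
  {x : R | rep hJ x == x}.
HB.instance Definition _ (R : comPzRingType) (J : R -> Prop) (hJ : is_ideal J) :=
  [isSub of qt hJ for @sval _ _].
HB.instance Definition _ (R : comPzRingType) (J : R -> Prop) (hJ : is_ideal J) :=
  [Choice of qt hJ by <:].

Section Quot.
Variables (R : comPzRingType) (J : R -> Prop) (hJ : is_ideal J).
Let J0 : J 0. Proof. by case: hJ. Qed.
Let JB x y : J x -> J y -> J (x - y). Proof. by case: hJ => _ h _; apply: h. Qed.
Let JM a x : J x -> J (a * x). Proof. by case: hJ => _ _ h; apply: h. Qed.
Let JD x y : J x -> J y -> J (x + y).
Proof. by move=> hx hy; rewrite -[y]opprK; apply: JB => //; rewrite -sub0r; apply: JB. Qed.

Lemma mk_subproof r : rep hJ (rep hJ r) == rep hJ r.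
Proof. by apply/eqP; apply: rep_eq; apply: rep_spec. Qed.
Definition mk (r : R) : qt hJ := exist _ (rep hJ r) (mk_subproof r).
Lemma mk_eq r s : J (r - s) -> mk r = mk s.
Proof. by move=> h; apply: val_inj => /=; apply: rep_eq. Qed.
Lemma mk_val (u : qt hJ) : mk (val u) = u.
Proof. by apply: val_inj => /=; apply/eqP; apply: (valP u). Qed.
Lemma mk_inj r s : mk r = mk s -> J (r - s).
Proof.
move/(congr1 val) => /= h.
have -> : r - s = (rep hJ s - s) - (rep hJ r - r) by rewrite h; ring.
by apply: JB; apply: rep_spec.
Qed.
Lemma qind (P : qt hJ -> Prop) : (forall r, P (mk r)) -> forall u, P u.
Proof. by move=> h u; rewrite -(mk_val u). Qed.

Definition qzero := mk 0.
Definition qadd (u v : qt hJ) := mk (val u + val v).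
Definition qopp (u : qt hJ) := mk (- val u).
Definition qscale (a : R) (u : qt hJ) := mk (a * val u).

Lemma qaddE r s : qadd (mk r) (mk s) = mk (r + s).
Proof.
apply: mk_eq => /=; have -> : rep hJ r + rep hJ s - (r + s) = (rep hJ r - r) + (rep hJ s - s) by ring.
by apply: JD; apply: rep_spec.
Qed.
Lemma qoppE r : qopp (mk r) = mk (- r).
Proof.
apply: mk_eq => /=; have -> : - rep hJ r - - r = 0 - (rep hJ r - r) by ring.
by apply: JB => //; apply: rep_spec.
Qed.
Lemma qscaleE a r : qscale a (mk r) = mk (a * r).
Proof.
apply: mk_eq => /=; have -> : a * rep hJ r - a * r = a * (rep hJ r - r) by ring.
by apply: JM; apply: rep_spec.
Qed.

Lemma qaddA : associative qadd.
Proof. by elim/qind=> a; elim/qind=> b; elim/qind=> c; rewrite !qaddE addrA. Qed.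
Lemma qaddC : commutative qadd.
Proof. by elim/qind=> a; elim/qind=> b; rewrite !qaddE addrC. Qed.
Lemma qadd0 : left_id qzero qadd.
Proof. by elim/qind=> a; rewrite /qzero qaddE add0r. Qed.
Lemma qaddN : left_inverse qzero qopp qadd.
Proof. by elim/qind=> a; rewrite qoppE qaddE addNr. Qed.

HB.instance Definition _ := GRing.isZmodule.Build (qt hJ) qaddA qaddC qadd0 qaddN.
Lemma qmkD r s : mk r + mk s = mk (r + s). Proof. exact: qaddE. Qed.

Lemma qscaleA a b v : qscale a (qscale b v) = qscale (a * b) v.
Proof. by elim/qind: v => r; rewrite !qscaleE mulrA. Qed.
Lemma qscale1 : left_id 1 qscale.
Proof. by elim/qind=> r; rewrite qscaleE mul1r. Qed.
Lemma qscaleDr : right_distributive qscale qadd.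
Proof.
move=> a; elim/qind=> r; elim/qind=> s.
by rewrite qaddE !qscaleE qaddE mulrDr.
Qed.
Lemma qscaleDl v : {morph qscale^~ v : a b / a + b >-> qadd a b}.
Proof.
elim/qind: v => r a b; rewrite !qscaleE.
by rewrite qaddE mulrDl.
Qed.

HB.instance Definition _ := GRing.Zmodule_isLmodule.Build R (qt hJ) qscaleA qscale1 qscaleDr qscaleDl.

Lemma mkZ a r : a *: mk r = mk (a * r). Proof. exact: qscaleE. Qed.
Lemma mk0 : (0 : qt hJ) = mk 0. Proof. by []. Qed.
Lemma mk_lin : linear_on (V := R^o) (fun _ => True) mk.
Proof. by move=> a u v _ _; rewrite mkZ qmkD. Qed.
Lemma mk_surj (y : qt hJ) : exists r, mk r = y.
Proof. by exists (val y); apply: mk_val. Qed.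
Lemma mk_ker r : mk r = 0 <-> J r.
Proof.
rewrite mk0; split; first by move/mk_inj; rewrite subr0.
by move=> h; apply: mk_eq; rewrite subr0.
Qed.
Lemma val_mk r : J (val (mk r) - r).
Proof. exact: rep_spec. Qed.
Lemma qlin a (m m' : qt hJ) : J (val (a *: m + m') - (a * val m + val m')).
Proof.
elim/qind: m => r; elim/qind: m' => s; rewrite mkZ qmkD.
have -> : val (mk (a * r + s)) - (a * val (mk r) + val (mk s)) =
  (val (mk (a * r + s)) - (a * r + s)) - a * (val (mk r) - r) - (val (mk s) - s) by ring.
by apply: JB; [apply: JB; [|apply: JM] |]; apply: val_mk.
Qed.
End Quot.

Lemma pure_fix (R : comPzRingType) (I : R -> Prop) (hI : is_ideal I) :
  pure_ideal I -> forall a, I a -> exists b, I b /\ a = a * b.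
Proof.
move=> P a Ia.
have hIB := IB hI; have hIM := IM hI; have hI0 := I0 hI.
pose K := fun z => exists i, I i /\ z = a * i.
have hK : is_ideal K.
  split.
  - by exists 0; rewrite mulr0.
  - move=> x y [i [Ii ->]] [j [Ij ->]]; exists (i - j); split; first exact: hIB.
    by rewrite mulrBr.
  - move=> c x [i [Ii ->]]; exists (c * i); split; first exact: hIM.
    by rewrite mulrCA.
have flatM := P (qt hI) (mk hI) (mk_lin hI) (mk_surj (hJ := hI)) (mk_ker hI).
pose S := fun x : R^o => exists r, x = r * a.
have subS : submodule S.
  split.
  - by exists 0; rewrite mul0r.
  - by move=> u v [r ->] [s ->]; exists (r + s); rewrite mulrDl.
  - by move=> c u [r ->]; exists (c * r); rewrite -mulrA.
have := flatM (R^o) S subS 1 (fun _ => a) (fun _ => mk hI 1).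
have Sa : forall i : 'I_1, S a by move=> _; exists 1; rewrite mul1r.
move=> /(_ Sa) H.
have tv : tensor_vanishes (fun _ => True) (fun _ : 'I_1 => (a : R^o)) (fun _ => mk hI 1).
  move=> Pm b [bl br]; rewrite big_ord1.
  have b0 := lin0 (V := R^o) Logic.I (bl (mk hI 1)).
  have b10 := lin0 (V := qt hI) Logic.I (br 1 Logic.I).
  have e1 : (a : R^o) = a *: (1 : R^o) + 0 by rewrite addr0; exact: (esym (mulr1 a)).
  rewrite e1 (bl (mk hI 1) a 1 0 Logic.I Logic.I) b0 addr0.
  have := br 1 Logic.I a (mk hI 1) 0 Logic.I Logic.I.
  rewrite addr0 mkZ mulr1 b10 addr0.
  have -> : mk hI a = 0 by apply/mk_ker.
  by move=> <-.
have := H tv (qt hK) (fun (x : R^o) (m : qt hI) => mk hK (x * val m)).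
rewrite big_ord1.
have bil : bilinear_on S (fun (x : R^o) (m : qt hI) => mk hK (x * val m)).
  split.
  - move=> m c u v _ _ /=; rewrite mkZ qmkD; congr (mk hK _).
    by rewrite /GRing.scale /=; ring.
  - move=> x [r ->] c m m' _ _ /=; rewrite mkZ qmkD; apply: mk_eq.
    have -> : r * a * val (c *: m + m') - (c * (r * a * val m) + r * a * val m') =
      a * (r * (val (c *: m + m') - (c * val m + val m'))) by ring.
    exists (r * (val (c *: m + m') - (c * val m + val m'))); split => //.
    by apply: hIM; apply: qlin.
move=> /(_ bil) /mk_ker [i [Ii hi]].
exists (i - (val (mk hI 1) - 1)); split.
  by apply: hIB => //; apply: val_mk.
by rewrite mulrBr -hi; ring.
Qed.

Lemma get_e (R : comPzRingType) (I : R -> Prop) (hI : is_ideal I) :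
  fg_ideal I -> (forall a, I a -> exists b, I b /\ a = a * b) ->
  exists e, I e /\ forall x, I x -> e * x = x.
Proof.
move=> hfg Hb; have hfg' := hfg; case: hfg' => n [g hg].
have Ig : forall i, I (g i).
  move=> i; apply/hg; exists (fun j => if j == i then 1 else 0).
  rewrite (bigD1 i) //= eqxx mul1r big1 ?addr0 // => j /negbTE ->; by rewrite mul0r.
have step : forall k, exists e, I e /\ forall i : 'I_n, (i < k)%N -> g i * e = g i.
  elim=> [|k [e [Ie he]]]; first by exists 0; split => //; exact: (I0 hI).
  case: (ltnP k n) => hk; last first.
    exists e; split => // i hi; apply: he; exact: (leq_trans (ltn_ord i) hk).
  have [b [Ib hb]] := Hb _ (Ig (Ordinal hk)).
  exists (e + b - e * b); split.
    apply: (IB hI); first by apply: (fgD hfg).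
    exact: (IM hI).
  move=> i; rewrite ltnS leq_eqVlt => /orP [/eqP hik | hik].
    have -> : i = Ordinal hk by apply: val_inj.
    apply/eqP; rewrite -subr_eq0.
    have -> : g (Ordinal hk) * (e + b - e * b) - g (Ordinal hk) =
      (g (Ordinal hk) * b - g (Ordinal hk)) * (1 - e) by ring.
    by rewrite -hb subrr mul0r.
  apply/eqP; rewrite -subr_eq0.
  have -> : g i * (e + b - e * b) - g i = (g i * e - g i) * (1 - b) by ring.
  by rewrite he // subrr mul0r.
have [e [Ie he]] := step n.
exists e; split => // x /hg [c ->].
rewrite mulr_sumr; apply: eq_bigr => i _.
by rewrite mulrCA (mulrC e) he.
Qed.

Theorem corollary2p5 (R : comPzRingType) (I : R -> Prop) (hI : is_ideal I) :
  fg_ideal I -> pure_ideal I ->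
  (semihereditary R <-> semihereditary (R ⋈ hI)).
Proof.
move=> hfg hp.
have [e [Ie he]] := get_e hI hfg (pure_fix hI hp).
rewrite !semi_DB; split.
  exact: (fwd_DB Ie he).
exact: back_DB.
Qed.
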